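(* (i) For any $k,l\ge1$, $v\in\mathfrak{H}y$, $w\in\mathfrak{H}^1$: $\gamma_\hbar^t(z_k)v\ast_+z_lw=\gamma_\hbar^t(z_k)(v\ast_+z_lw)+z_l\bigl(\gamma_\hbar^t(z_k)v\ast_+w\bigr)+(1-t)(z_k\circ_+z_l)(v\ast_+w)$. (ii) For any $k,l\ge1$, $v,w\in\mathfrak{H}^1$: $S_\hbar^t(z_kv)\ast_+z_lw=\gamma_\hbar^t(z_k)\bigl(S_\hbar^t(v)\ast_+z_lw\bigr)+z_l\bigl(S_\hbar^t(z_kv)\ast_+w\bigr)+(1-t)(z_k\circ_+z_l)\bigl(S_\hbar^t(v)\ast_+w\bigr)$. (iii) For any $k\ge0$, $l\ge1$, $v=z_pV$ with $p\ge1$, $V\in\mathfrak{H}^1$, and $w\in\mathfrak{H}y$: $x^kv\ast_+\gamma_\hbar^t(z_l)w=z_{k+p}\bigl(V\ast_+\gamma_\hbar^t(z_l)w\bigr)+\gamma_\hbar^t(z_l)(x^kv\ast_+w)+(1-t)(z_{k+p}\circ_+z_l)(V\ast_+w)$.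
   Context: Let $\hbar,t$ be formal variables and $\mathfrak{H}=\mathbb{Q}[\hbar,t]\langle x,y\rangle$ the noncommutative polynomial algebra over $\mathbb{Q}[\hbar,t]$; put $\mathfrak{H}^1=\mathbb{Q}[\hbar,t]+\mathfrak{H}y$ and $z_j=x^{j-1}y$ ($j\ge1$). Let $\mathfrak z$ be the $\mathbb{Q}[\hbar,t]$-span of $\{z_j\}$, with bilinear product $z_i\circ_+ z_j=z_{i+j}+\hbar z_{i+j-1}$, and for $a\in\mathfrak z$, $b\in\mathfrak{H}^1$ the product $ab$ denotes concatenation. Let $\gamma_\hbar^t$ be the algebra automorphism of $\mathfrak{H}$ with $\gamma_\hbar^t(x)=x$, $\gamma_\hbar^t(y)=tx+y+\hbar t$ (so $\gamma_\hbar^t(z_k)=x^{k-1}(tx+y+\hbar t)$). Let $S_\hbar^t:\mathfrak{H}^1\to\mathfrak{H}^1$ be the $\mathbb{Q}[\hbar,t]$-linear map with $S_\hbar^t(1)=1$ and $S_\hbar^t(z_kw)=z_kS_\hbar^t(w)+t\,z_k\circ_+S_\hbar^t(w)$ for words $w\in\mathfrak{H}^1$, where $\circ_+$ acts on $\mathfrak{H}^1$ via $z_i\circ_+1=0$, $z_i\circ_+(z_jw)=(z_i\circ_+z_j)w$. The product $\ast_+$ on $\mathfrak{H}^1$ is the $\mathbb{Q}[\hbar,t]$-bilinear product with $1\ast_+w=w\ast_+1=w$ and $z_iu\ast_+z_jv=z_i(u\ast_+z_jv)+z_j(z_iu\ast_+v)+(z_i\circ_+z_j)(u\ast_+v)$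 for $i,j\ge1$ and words $u,v,w$. *)

(* Defs.v *)
(* Noncommutative polynomials over Q[hbar,t] encoded as
   finite formal linear combinations (lists) of words; equality is
   coefficientwise (eqnc). *)
From mathcomp Require Import all_boot all_algebra.
From mathcomp.multinomials Require Import mpoly.
Set Implicit Arguments. Unset Strict Implicit. Unset Printing Implicit Defensive.
Import GRing.Theory.
Local Open Scope ring_scope.

Definition R := {mpoly rat[2]}.
Definition hbar : R := 'X_(0 : 'I_2).
Definition tt : R := 'X_(1 : 'I_2).

(* letters: false = x, true = y *)
Definition word := seq bool.
Definition NC := seq (R * word).

Definition coef (p : NC) (w : word) : R :=
  \sum_(a <- p) (if a.2 == w then a.1 else 0).
Definition eqnc (p q : NC) : Prop := forall w, coef p w = coef q w.

Definition addnc (p q : NC) : NC := p ++ q.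
Definition scalenc (c : R) (p : NC) : NC := [seq (c * a.1, a.2) | a <- p].
Definition mulnc (p q : NC) : NC :=
  [seq (a.1 * b.1, a.2 ++ b.2) | a <- p, b <- q].
Definition wd (w : word) : NC := [:: (1, w)].

Definition xpow (n : nat) : word := nseq n false.
Definition zw (j : nat) : word := rcons (nseq j.-1 false) true.
Definition z (j : nat) : NC := wd (zw j).

Definition inH1w (w : word) : bool := (w == [::]) || last false w.
Definition inHyw (w : word) : bool := last false w.
Definition inH1 (p : NC) : Prop := forall w, coef p w != 0 -> inH1w w.
Definition inHy (p : NC) : Prop := forall w, coef p w != 0 -> inHyw w.

(* index sequence (i1,...,in) of a word z_{i1}...z_{in} of H^1 *)
Fixpoint idx_aux (c : nat) (w : word) : seq nat :=
  match w with
  | [::] => [::]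
  | false :: w' => idx_aux c.+1 w'
  | true :: w' => c.+1 :: idx_aux 0 w'
  end.
Definition idx (w : word) : seq nat := idx_aux 0 w.
Definition zword (s : seq nat) : word := flatten [seq zw j | j <- s].

(* z_i o_+ z_j = z_{i+j} + hbar z_{i+j-1}, on index sequences *)
Definition circI (i j : nat) (c : R) (rest : seq nat) : seq (R * seq nat) :=
  [:: (c, (i + j)%N :: rest); (c * hbar, (i + j).-1 :: rest)].

Fixpoint stI (a : seq nat) : seq nat -> seq (R * seq nat) :=
  match a with
  | [::] => fun b => [:: (1, b)]
  | i :: u =>
    fix stIin (b : seq nat) : seq (R * seq nat) :=
      match b with
      | [::] => [:: (1, i :: u)]
      | j :: v =>
          [seq (e.1, i :: e.2) | e <- stI u (j :: v)]
          ++ [seq (e.1, j :: e.2) | e <- stIin v]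
          ++ flatten [seq circI i j e.1 e.2 | e <- stI u v]
      end
  end.

Definition liftI (s : seq (R * seq nat)) : NC := [seq (e.1, zword e.2) | e <- s].

(* *_+ on words of H^1 (zero outside H^1, where it is not defined) *)
Definition stw (u v : word) : NC :=
  if inH1w u && inH1w v then liftI (stI (idx u) (idx v)) else [::].
Definition stp (p q : NC) : NC :=
  flatten [seq scalenc (a.1 * b.1) (stw a.2 b.2) | a <- p, b <- q].

Definition circz (i j : nat) : NC := liftI (circI i j 1 [::]).

Definition gamma_letter (b : bool) : NC :=
  if b then [:: (tt, [:: false]); (1, [:: true]); (hbar * tt, [::])]
  else [:: (1, [:: false])].
Definition gamma_word (w : word) : NC := foldr (fun b p => mulnc (gamma_letter b) p) (wd [::]) w.
Definition gamma (p : NC) : NC :=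
  flatten [seq scalenc a.1 (gamma_word a.2) | a <- p].

Definition circL (k : nat) (e : R * seq nat) : seq (R * seq nat) :=
  match e.2 with
  | [::] => [::]
  | j :: rest => circI k j e.1 rest
  end.
Fixpoint SI (s : seq nat) : seq (R * seq nat) :=
  match s with
  | [::] => [:: (1, [::])]
  | k :: u =>
      [seq (e.1, k :: e.2) | e <- SI u]
      ++ [seq (tt * e.1, e.2) | e <- flatten [seq circL k e | e <- SI u]]
  end.
Definition Sw (w : word) : NC := if inH1w w then liftI (SI (idx w)) else [::].
Definition S (p : NC) : NC := flatten [seq scalenc a.1 (Sw a.2) | a <- p].

(* Main.v *)
Require Import Defs.
From mathcomp Require Import all_boot all_algebra ring zify.
From mathcomp.multinomials Require Import mpoly.
Set Implicit Arguments. Unset Strict Implicit. Unset Printing Implicit Defensive.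
Import GRing.Theory.
Local Open Scope ring_scope.

Section WS.
Variable T : Type.
Definition ws (p : seq (R * T)) (F : T -> R) : R := \sum_(a <- p) a.1 * F a.2.

Lemma ws_nil F : ws [::] F = 0.
Proof. by rewrite /ws big_nil. Qed.
Lemma ws_cons a p F : ws (a :: p) F = a.1 * F a.2 + ws p F.
Proof. by rewrite /ws big_cons. Qed.
Lemma ws_cat p q F : ws (p ++ q) F = ws p F + ws q F.
Proof. by rewrite /ws big_cat. Qed.
Lemma ws_flatten (L : seq (seq (R * T))) F : ws (flatten L) F = \sum_(l <- L) ws l F.
Proof. elim: L => [|l L IH]; first by rewrite /ws big_nil big_nil.
by rewrite /= ws_cat IH big_cons. Qed.
Lemma ws_ext p F G : (forall u, F u = G u) -> ws p F = ws p G.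
Proof. by move=> H; apply: eq_bigr => a _; rewrite H. Qed.
Lemma ws_add p F G : ws p (fun u => F u + G u) = ws p F + ws p G.
Proof. by rewrite /ws -big_split; apply: eq_bigr => a _; rewrite mulrDr. Qed.
Lemma ws_mulc p c F : ws p (fun u => c * F u) = c * ws p F.
Proof. rewrite /ws mulr_sumr; apply: eq_bigr => a _; ring. Qed.
Lemma ws_0 p : ws p (fun _ => 0) = 0.
Proof. by rewrite /ws big1 // => a _; rewrite mulr0. Qed.
Lemma ws_mapscale c (p : seq (R * T)) F :
  ws [seq (c * e.1, e.2) | e <- p] F = c * ws p F.
Proof. rewrite /ws big_map mulr_sumr; apply: eq_bigr => a _ /=; ring. Qed.
Lemma ws_in (P : T -> bool) p F G : (forall u, P u -> F u = G u) ->
  all (fun e => P e.2) p -> ws p F = ws p G.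
Proof. move=> H; elim: p => [|a p IH] /=; first by rewrite !ws_nil.
by case/andP=> Pa Pp; rewrite !ws_cons H // IH. Qed.
End WS.

Lemma ws_mapsnd (T U : Type) (f : U -> T) (p : seq (R * U)) F :
  ws [seq (e.1, f e.2) | e <- p] F = ws p (fun u => F (f u)).
Proof. by rewrite /ws big_map. Qed.

Lemma ws_exch (T U : Type) (p : seq (R * T)) (q : seq (R * U)) F :
  ws p (fun u => ws q (fun v => F u v)) = ws q (fun v => ws p (fun u => F u v)).
Proof.
rewrite /ws. under eq_bigr => a _ do rewrite mulr_sumr.
rewrite exchange_big /=; apply: eq_bigr => b _; rewrite mulr_sumr.
apply: eq_bigr => a _; ring.
Qed.

Lemma ws_allpairs (T U V : Type) (f : (R * T) -> (R * U) -> R * V) p q F :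
  ws [seq f a b | a <- p, b <- q] F = \sum_(a <- p) ws [seq f a b | b <- q] F.
Proof. elim: p => [|a p IH]; first by rewrite big_nil /= ws_nil.
by rewrite allpairs_cons ws_cat IH big_cons. Qed.

Definition dl (T : eqType) (w : T) := fun u : T => if u == w then (1:R) else 0.
Lemma coef_ws p w : coef p w = ws p (dl w).
Proof. rewrite /coef /ws; apply: eq_bigr => a _; rewrite /dl; case: eqP => _; ring. Qed.

Definition cf (T : eqType) (p : seq (R * T)) (w : T) := ws p (dl w).

Lemma ws_support (T : eqType) (p : seq (R * T)) F (s : seq T) : uniq s ->
  {subset [seq a.2 | a <- p] <= s} -> ws p F = \sum_(u <- s) cf p u * F u.
Proof.
move=> us; elim: p => [|a p IH] sub.
  by rewrite ws_nil big1 // => u _; rewrite /cf ws_nil mul0r.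
have a2s : a.2 \in s by apply: sub; rewrite inE eqxx.
rewrite ws_cons IH; last by move=> u Hu; apply: sub; rewrite inE Hu orbT.
rewrite [RHS](eq_bigr (fun u => cf [:: a] u * F u + cf p u * F u)); last first.
  by move=> u _; rewrite /cf !ws_cons ws_nil addr0 mulrDl.
rewrite big_split /=; congr (_ + _).
rewrite (bigD1_seq a.2) //= big1 => [|u /negPf nu]; rewrite /cf ws_cons ?ws_nil /dl ?eqxx; first ring.
by rewrite eq_sym nu; ring.
Qed.

Lemma ws_supp (T : eqType) (p : seq (R * T)) F G :
  (forall u, cf p u != 0 -> F u = G u) -> ws p F = ws p G.
Proof.
move=> H; have us := undup_uniq [seq a.2 | a <- p].
have sub : {subset [seq a.2 | a <- p] <= undup [seq a.2 | a <- p]} by move=> u; rewrite mem_undup.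
rewrite !(ws_support _ us sub); apply: eq_bigr => u _.
by case: (eqVneq (cf p u) 0) => [->|/H ->]; rewrite ?mul0r.
Qed.

Lemma ws_scalenc c p F : ws (scalenc c p) F = c * ws p F.
Proof. exact: ws_mapscale. Qed.
Lemma ws_addnc p q F : ws (addnc p q) F = ws p F + ws q F.
Proof. exact: ws_cat. Qed.
Lemma ws_wd u F : ws (wd u) F = F u.
Proof. by rewrite /wd ws_cons ws_nil addr0 mul1r. Qed.

Lemma ws_mul p q F : ws (mulnc p q) F = ws p (fun u => ws q (fun v => F (u ++ v))).
Proof.
rewrite /mulnc ws_allpairs /ws; apply: eq_bigr => a _.
rewrite big_map mulr_sumr; apply: eq_bigr => b _ /=; ring.
Qed.

Lemma ws_stp p q F : ws (stp p q) F = ws p (fun u => ws q (fun v => ws (stw u v) F)).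
Proof.
rewrite /stp ws_flatten big_allpairs_dep /ws; apply: eq_bigr => a _.
rewrite mulr_sumr; apply: eq_bigr => b _ /=.
rewrite -/(ws _ _) ws_mapscale /ws; ring.
Qed.

Lemma ws_gamma p F : ws (gamma p) F = ws p (fun u => ws (gamma_word u) F).
Proof. by rewrite /gamma ws_flatten big_map; apply: eq_bigr => a _; rewrite ws_mapscale. Qed.

Lemma ws_S p F : ws (S p) F = ws p (fun u => ws (Sw u) F).
Proof. by rewrite /S ws_flatten big_map; apply: eq_bigr => a _; rewrite ws_mapscale. Qed.

Definition lin (f : NC -> NC) := forall p F, ws (f p) F = ws p (fun u => ws (f (wd u)) F).

Lemma lin_comp f g : lin f -> lin g -> lin (fun p => f (g p)).
Proof.
move=> Hf Hg p F; rewrite Hf Hg; apply: ws_ext => u.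
by rewrite [RHS]Hf.
Qed.
Lemma lin_add f g : lin f -> lin g -> lin (fun p => addnc (f p) (g p)).
Proof.
move=> Hf Hg p F; rewrite ws_addnc Hf Hg -ws_add; apply: ws_ext => u.
by rewrite ws_addnc.
Qed.
Lemma lin_scale c f : lin f -> lin (fun p => scalenc c (f p)).
Proof.
move=> Hf p F; rewrite ws_scalenc Hf -ws_mulc; apply: ws_ext => u.
by rewrite ws_scalenc.
Qed.
Lemma lin_mull q : lin (fun p => mulnc q p).
Proof.
move=> p F; rewrite ws_mul ws_exch; apply: ws_ext => u.
by rewrite ws_mul; apply: ws_ext => v; rewrite ws_wd.
Qed.
Lemma lin_mulr q : lin (fun p => mulnc p q).
Proof.
move=> p F; rewrite ws_mul; apply: ws_ext => u.
by rewrite ws_mul ws_wd.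
Qed.
Lemma lin_stl q : lin (fun p => stp p q).
Proof.
move=> p F; rewrite ws_stp; apply: ws_ext => u.
by rewrite ws_stp ws_wd.
Qed.
Lemma lin_str q : lin (fun p => stp q p).
Proof.
move=> p F; rewrite ws_stp ws_exch; apply: ws_ext => u.
by rewrite ws_stp; apply: ws_ext => v; rewrite ws_wd.
Qed.
Lemma lin_gamma : lin gamma.
Proof. by move=> p F; rewrite ws_gamma; apply: ws_ext => u; rewrite ws_gamma ws_wd. Qed.
Lemma lin_S : lin S.
Proof. by move=> p F; rewrite ws_S; apply: ws_ext => u; rewrite ws_S ws_wd. Qed.
Lemma lin_id : lin (fun p => p).
Proof. by move=> p F; apply: ws_ext => u; rewrite ws_wd. Qed.

Lemma bilin_red (E E' : NC -> NC -> NC) (P Q : word -> bool) v w :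
  (forall w, lin (fun v => E v w)) -> (forall v, lin (fun w => E v w)) ->
  (forall w, lin (fun v => E' v w)) -> (forall v, lin (fun w => E' v w)) ->
  (forall a b, P a -> Q b -> forall F, ws (E (wd a) (wd b)) F = ws (E' (wd a) (wd b)) F) ->
  (forall a, coef v a != 0 -> P a) -> (forall b, coef w b != 0 -> Q b) ->
  eqnc (E v w) (E' v w).
Proof.
move=> L1 L2 L3 L4 H Hv Hw x; rewrite !coef_ws L1 L3.
apply: ws_supp => a /= Ha; rewrite L2 L4; apply: ws_supp => b Hb.
by apply: H; [apply: Hv; rewrite coef_ws | apply: Hw; rewrite coef_ws].
Qed.

Definition LI := seq (R * seq nat).
Definition shift (i : nat) (F : seq nat -> R) := fun s => F (i :: s).
Definition cS (i j : nat) (F : seq nat -> R) := fun s => F ((i + j)%N :: s) + hbar * F ((i + j).-1 :: s).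
Definition gS (k : nat) (F : seq nat -> R) := fun Y =>
  F (k :: Y) + tt * (match Y with [::] => 0 | q :: r => cS k q F r end).

Lemma stI_cons2 i u j v : stI (i :: u) (j :: v) =
  [seq (e.1, i :: e.2) | e <- stI u (j :: v)]
  ++ [seq (e.1, j :: e.2) | e <- stI (i :: u) v]
  ++ flatten [seq circI i j e.1 e.2 | e <- stI u v].
Proof. by []. Qed.

Lemma ws_circ i j (L : LI) F : ws (flatten [seq circI i j e.1 e.2 | e <- L]) F = ws L (cS i j F).
Proof.
rewrite ws_flatten big_map /ws; apply: eq_bigr => e _.
rewrite /circI big_cons big_cons big_nil /cS /=; ring.
Qed.

Lemma SR0 v F : ws (stI [::] v) F = F v.
Proof. by rewrite /= ws_cons ws_nil mul1r addr0. Qed.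
Lemma SR1 i u F : ws (stI (i :: u) [::]) F = F (i :: u).
Proof. by rewrite /= ws_cons ws_nil mul1r addr0. Qed.
Lemma SR2 i u j v F : ws (stI (i :: u) (j :: v)) F =
  ws (stI u (j :: v)) (shift i F) + ws (stI (i :: u) v) (shift j F) + ws (stI u v) (cS i j F).
Proof.
by rewrite stI_cons2 !ws_cat !(ws_mapsnd (fun s => _ :: s)) ws_circ addrA.
Qed.

Lemma P1 X p k F : ws X (shift p (gS k F)) = ws X (shift p (shift k F)) + tt * ws X (cS k p F).
Proof. by rewrite -ws_mulc -ws_add. Qed.
Lemma P2 X i j F : ws X (cS i j F) = ws X (shift (i + j) F) + hbar * ws X (shift (i + j).-1 F).
Proof. by rewrite -ws_mulc -ws_add. Qed.

Lemma gS_nil k F : gS k F [::] = F [:: k].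
Proof. by rewrite /gS mulr0 addr0. Qed.
Lemma gS_cons k F q r : gS k F (q :: r) = F (k :: q :: r) + tt * (F ((k + q)%N :: r) + hbar * F ((k + q).-1 :: r)).
Proof. by []. Qed.

Lemma GenI k l F Y b : (0 < k)%N -> (0 < l)%N ->
  gS k (fun y => ws (stI y (l :: b)) F) Y = ws (stI Y (l :: b)) (gS k F)
  + gS k (fun y => ws (stI y b) (shift l F)) Y + (1 - tt) * ws (stI Y b) (cS k l F).
Proof.
case: k => // k _; case: l => // l _.
case: Y => [|p V].
  rewrite !gS_nil SR2 !SR0 gS_cons /cS /shift; ring.
rewrite !gS_cons !SR2 !P1 !P2 ?P1 ?P2 ?addSn ?addnS ?succnK ?addnA ?addSn ?addnS ?succnK.
ring.
Qed.

Lemma Gen3 a l q F V W : (0 < a)%N -> (0 < l)%N -> (0 < q)%N ->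
  gS l (fun y => ws (stI (a :: V) y) F) (q :: W) =
  gS l (fun y => ws (stI V y) (shift a F)) (q :: W) + ws (stI (a :: V) (q :: W)) (gS l F)
  + (1 - tt) * ws (stI V (q :: W)) (cS a l F).
Proof.
case: a => // a _; case: l => // l _; case: q => // q _.
rewrite !gS_cons !SR2 !P1 !P2 ?P1 ?P2 ?addSn ?addnS ?succnK ?addnA ?addSn ?addnS ?succnK.
rewrite (addnC l a); ring.
Qed.

Lemma ws_SI k u F : ws (SI (k :: u)) F = ws (SI u) (gS k F).
Proof.
rewrite /= ws_cat ws_mapsnd ws_mapscale ws_flatten big_map /ws mulr_sumr -big_split.
apply: eq_bigr => e _ /=; rewrite /gS /circL.
case: e => c [|q r] /=; rewrite ?big_nil /circI ?big_cons ?big_nil /cS /=; ring.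
Qed.

Definition pos (s : seq nat) := all (fun j => 0 < j)%N s.

Lemma all_stI u v : pos u -> pos v -> all (fun e => pos e.2) (stI u v).
Proof.
elim: u v => [|i u IHu] v; first by move=> _ pv; rewrite /= pv.
elim: v => [|j v IHv]; first by move=> pu _ /=; rewrite andbT.
move=> pu pv; have /andP [pi pu'] := pu; have /andP [pj pv'] := pv.
rewrite stI_cons2 !all_cat !all_map.
apply/and3P; split.
- by apply/allP => e /(allP (IHu _ pu' pv)) /=; rewrite /pos /= pi.
- by apply/allP => e /(allP (IHv pu pv')) /=; rewrite /pos /= pj.
- apply/allP => e /flattenP [x /mapP [d /(allP (IHu _ pu' pv')) pd ->]].
  move: pd; rewrite /pos /circI !inE => pd /orP [] /eqP -> /=; rewrite pd andbT.
    by rewrite addn_gt0 pi.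
  by move: pi pj; clear; lia.
Qed.

Lemma stI_ne u v : v != [::] -> all (fun e => e.2 != [::]) (stI u v).
Proof.
case: u => [|i u]; first by move=> /= ->.
case: v => // j v _; rewrite stI_cons2 !all_cat !all_map.
apply/and3P; split; try by apply/allP.
by apply/allP => e /flattenP [x /mapP [d _ ->]]; rewrite /circI !inE => /orP [] /eqP ->.
Qed.

Lemma all_SI u : pos u -> all (fun e => pos e.2) (SI u).
Proof.
elim: u => [|k u IH] //= /andP [pk pu].
rewrite all_cat !all_map; apply/andP; split.
  by apply/allP => e /(allP (IH pu)) /=; rewrite /pos /= pk.
apply/allP => e /flattenP [x /mapP [d /(allP (IH pu)) pd ->]].
rewrite /circL; case: d pd => c [|j r] //= /andP [pj pr].
move: pr; rewrite /pos /circI !inE => pr /orP [] /eqP -> /=; rewrite pr andbT.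
  by rewrite addn_gt0 pk.
by move: pk pj; clear; lia.
Qed.

Lemma zw_cat j X : zw j ++ X = nseq j.-1 false ++ true :: X.
Proof. by rewrite /zw cat_rcons. Qed.

Lemma zword_cons j s : zword (j :: s) = zw j ++ zword s.
Proof. by []. Qed.

Lemma idx_nseq c n w : idx_aux c (nseq n false ++ w) = idx_aux (c + n) w.
Proof. by elim: n c => [|n IH] c /=; rewrite ?addn0 // IH addnS. Qed.

Lemma idx_zw j w : (0 < j)%N -> idx (zw j ++ w) = j :: idx w.
Proof. by case: j => // j _; rewrite zw_cat /idx idx_nseq. Qed.

Lemma idx_zword s : pos s -> idx (zword s) = s.
Proof. elim: s => [|j s IH] //= /andP [pj ps]. by rewrite idx_zw // IH. Qed.

Lemma last_zword s : last true (zword s) = true.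
Proof. elim: s => [|j s IH] //=. by rewrite last_cat /zw last_rcons. Qed.

Lemma inH1w_zword s : inH1w (zword s).
Proof. case: s => [|j s] //=. by rewrite /inH1w last_cat /zw last_rcons last_zword orbT. Qed.

Lemma pos_idx c u : pos (idx_aux c u).
Proof. by elim: u c => [|[] u IH] c //=. Qed.

Lemma zword_idx_aux c u : last false u -> zword (idx_aux c u) = nseq c false ++ u.
Proof.
elim: u c => [|[] u IH] c //=.
- move=> Hl; rewrite zword_cons zw_cat /=; congr (_ ++ _ :: _).
  case: u IH Hl => [|d u] IH Hl //; by rewrite (IH 0).
- move=> Hl; rewrite IH // -addn1 nseqD -catA //.
Qed.

Lemma zword_idx u : inH1w u -> zword (idx u) = u.
Proof. case/orP => [/eqP -> //|Hl]; exact: zword_idx_aux. Qed.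

Lemma idx_ne c u : last false u -> idx_aux c u != [::].
Proof. by elim: u c => [|[] u IH] c //= Hl; apply: IH. Qed.

Lemma stw_zword s s' : pos s -> pos s' -> stw (zword s) (zword s') = liftI (stI s s').
Proof. by move=> ps ps'; rewrite /stw !inH1w_zword !idx_zword. Qed.

Lemma ws_liftI L F : ws (liftI L) F = ws L (fun s => F (zword s)).
Proof. exact: ws_mapsnd. Qed.

Lemma ws_gw_nseq n w F : ws (gamma_word (nseq n false ++ w)) F = ws (gamma_word w) (fun v => F (nseq n false ++ v)).
Proof.
elim: n F => [|n IH] F //=.
rewrite ws_mul /gamma_letter ws_cons ws_nil addr0 mul1r IH //.
Qed.

Lemma ws_gz k F : (0 < k)%N -> ws (gamma (z k)) F =
  tt * F (nseq k false) + F (zw k) + hbar * tt * F (nseq k.-1 false).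
Proof.
case: k => // k _.
rewrite ws_gamma /z ws_wd /zw -cats1 ws_gw_nseq /= ws_mul /gamma_letter !ws_cons ws_nil.
rewrite /= !ws_nil !cats0.
have -> : nseq k false ++ [:: false] = false :: nseq k false by elim: k => //= k ->.
ring.
Qed.

Lemma ws_gamma_cat k q r G : (0 < k)%N -> (0 < q)%N ->
  ws (gamma (z k)) (fun g => G (g ++ zword (q :: r))) = gS k (fun s => G (zword s)) (q :: r).
Proof.
case: k => // k _; case: q => // q _.
rewrite ws_gz // gS_cons !zword_cons !zw_cat /= addnS /= nseqD -catA; ring.
Qed.

Lemma ws_mulwd p b H : ws (mulnc p (wd b)) H = ws p (fun u => H (u ++ b)).
Proof. by rewrite ws_mul; apply: ws_ext => u; rewrite ws_wd. Qed.
Lemma ws_zl l b H : ws (mulnc (z l) (wd b)) H = H (zw l ++ b).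
Proof. by rewrite ws_mulwd ws_wd. Qed.
Lemma stw_idx u v F : inH1w u -> inH1w v ->
  ws (stw u v) F = ws (stI (idx u) (idx v)) (fun s => F (zword s)).
Proof. by move=> hu hv; rewrite /stw hu hv ws_liftI. Qed.
Lemma gS_in k F G q r : (0 < k)%N -> pos (q :: r) -> (forall s, pos s -> F s = G s) ->
  gS k F (q :: r) = gS k G (q :: r).
Proof.
case: k => // k _ /andP [pq pr] H; rewrite !gS_cons !H //= /pos /= ?pr ?pq ?andbT //.
by rewrite addn_gt0 pq orbT; exact: pr.
Qed.
Lemma stI_pn u v : pos u -> pos v -> v != [::] -> all (fun e => pos e.2 && (e.2 != [::])) (stI u v).
Proof.
move=> pu pv nv; have A1 := all_stI pu pv; have A2 := stI_ne u nv.
by apply/allP => e he; rewrite (allP A1 e he) (allP A2 e he).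
Qed.
Lemma ws_Gam_L k (L : LI) F : (0 < k)%N -> all (fun e => pos e.2 && (e.2 != [::])) L ->
  ws L (fun s => ws (gamma (z k)) (fun u => F (u ++ zword s))) = ws L (gS k (fun s => F (zword s))).
Proof.
move=> pk HL; apply: (ws_in (P := fun s => pos s && (s != [::]))) HL => -[|q r] // /andP [/andP [pq pr] _].
exact: ws_gamma_cat.
Qed.
Lemma LH k a c F : (0 < k)%N -> inHyw a -> inH1w c ->
  ws (mulnc (gamma (z k)) (wd a)) (fun u => ws (stw u c) F) =
  gS k (fun y => ws (stI y (idx c)) (fun s => F (zword s))) (idx a).
Proof.
move=> pk Ha Hc; rewrite ws_mulwd.
have Ha' : inH1w a by rewrite /inH1w; move: Ha; rewrite /inHyw => ->; rewrite orbT.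
rewrite /idx; case E: (idx_aux 0 a) (idx_ne 0 Ha) (pos_idx 0 a) => [//|q r] _ pqr.
have Ea : a = zword (q :: r) by rewrite -E; symmetry; exact: (zword_idx Ha').
rewrite Ea (@ws_gamma_cat k q r (fun x => ws (stw x c) F)) //; last by case/andP: pqr.
apply: gS_in => // s ps; by rewrite stw_idx ?inH1w_zword // idx_zword.
Qed.

Lemma ws_circz k l H : ws (circz k l) H = H (zw (k + l)) + hbar * H (zw (k + l).-1).
Proof.
have Z1 n : zword [:: n] = zw n by rewrite /zword /= cats0.
rewrite /circz ws_liftI /circI !ws_cons ws_nil /= !Z1; ring.
Qed.

Lemma inH1w_zwcat l b : inH1w b -> inH1w (zw l ++ b).
Proof.
move=> Hb; rewrite /inH1w last_cat /zw last_rcons.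
case: b Hb => [|d b] /=; first by rewrite orbT.
by rewrite /inH1w /= => ->; rewrite orbT.
Qed.

Lemma ws_Gmul X F : ws (mulnc (gamma (z 1)) X) F = ws (mulnc (gamma (z 1)) X) F.
Proof. by []. Qed.

Lemma part1_word k l a b F : (0 < k)%N -> (0 < l)%N -> inHyw a -> inH1w b ->
  ws (stp (mulnc (gamma (z k)) (wd a)) (mulnc (z l) (wd b))) F =
  ws (addnc (mulnc (gamma (z k)) (stp (wd a) (mulnc (z l) (wd b))))
     (addnc (mulnc (z l) (stp (mulnc (gamma (z k)) (wd a)) (wd b)))
            (scalenc (1 - tt) (mulnc (circz k l) (stp (wd a) (wd b)))))) F.
Proof.
move=> pk pl Ha Hb.
have Ha' : inH1w a by rewrite /inH1w; move: Ha; rewrite /inHyw => ->; rewrite orbT.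
have Hlb := inH1w_zwcat l Hb.
have pA := pos_idx 0 a; have pB := pos_idx 0 b.
have neA := idx_ne 0 Ha.
set Phi := fun s => F (zword s).
have E0 : ws (stp (mulnc (gamma (z k)) (wd a)) (mulnc (z l) (wd b))) F =
   gS k (fun y => ws (stI y (l :: idx b)) Phi) (idx a).
  rewrite ws_stp; under ws_ext => u do rewrite ws_zl.
  rewrite LH // idx_zw //.
have E1 : ws (mulnc (gamma (z k)) (stp (wd a) (mulnc (z l) (wd b)))) F =
   ws (stI (idx a) (l :: idx b)) (gS k Phi).
  rewrite ws_mul ws_exch ws_stp ws_wd ws_zl stw_idx // idx_zw //.
  rewrite (@ws_Gam_L k _ F) //; apply: stI_pn => //; exact/andP.
have E2 : ws (mulnc (z l) (stp (mulnc (gamma (z k)) (wd a)) (wd b))) F =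
   gS k (fun y => ws (stI y (idx b)) (shift l Phi)) (idx a).
  rewrite /z ws_mul ws_wd ws_stp; under ws_ext => u do rewrite ws_wd.
  by rewrite LH.
have E3 : ws (mulnc (circz k l) (stp (wd a) (wd b))) F = ws (stI (idx a) (idx b)) (cS k l Phi).
  rewrite ws_mul ws_circz !ws_stp !ws_wd !stw_idx //.
  by rewrite P2.
rewrite (ws_addnc (mulnc (gamma (z k)) _)) (ws_addnc (mulnc (z l) _)) ws_scalenc E0 E1 E2 E3 GenI //; ring.
Qed.

Lemma gS_in' k F G Y : (0 < k)%N -> pos Y -> (forall s, pos s -> F s = G s) ->
  gS k F Y = gS k G Y.
Proof.
move=> pk; case: Y => [|q r] pY H; last exact: gS_in.
by rewrite !gS_nil H // /pos /= pk.
Qed.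

Lemma SK k a H : (0 < k)%N -> inH1w a ->
  ws (S (mulnc (z k) (wd a))) H = ws (SI (idx a)) (gS k (fun s => H (zword s))).
Proof.
move=> pk Ha; rewrite ws_S ws_zl /Sw inH1w_zwcat // idx_zw // ws_liftI ws_SI //.
Qed.
Lemma S0 a H : inH1w a -> ws (S (wd a)) H = ws (SI (idx a)) (fun s => H (zword s)).
Proof. by move=> Ha; rewrite ws_S ws_wd /Sw Ha ws_liftI. Qed.

Lemma part2_word k l a b F : (0 < k)%N -> (0 < l)%N -> inH1w a -> inH1w b ->
  ws (stp (S (mulnc (z k) (wd a))) (mulnc (z l) (wd b))) F =
  ws (addnc (mulnc (gamma (z k)) (stp (S (wd a)) (mulnc (z l) (wd b))))
     (addnc (mulnc (z l) (stp (S (mulnc (z k) (wd a))) (wd b)))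
            (scalenc (1 - tt) (mulnc (circz k l) (stp (S (wd a)) (wd b)))))) F.
Proof.
move=> pk pl Ha Hb.
have Hlb := inH1w_zwcat l Hb.
have pA := pos_idx 0 a; have pB := pos_idx 0 b.
have plB : pos (l :: idx b) by exact/andP.
have SIp := all_SI pA.
set Phi := fun s => F (zword s).
have E0 : ws (stp (S (mulnc (z k) (wd a))) (mulnc (z l) (wd b))) F =
   ws (SI (idx a)) (gS k (fun y => ws (stI y (l :: idx b)) Phi)).
  rewrite ws_stp; under ws_ext => u do rewrite ws_zl.
  rewrite SK //; apply: (ws_in (P := pos)) SIp => Y pY; apply: gS_in' => // s ps.
  by rewrite stw_idx ?inH1w_zword // idx_zword // idx_zw.
have E1 : ws (mulnc (gamma (z k)) (stp (S (wd a)) (mulnc (z l) (wd b)))) F =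
   ws (SI (idx a)) (fun Y => ws (stI Y (l :: idx b)) (gS k Phi)).
  rewrite ws_mul ws_exch ws_stp S0 //; apply: (ws_in (P := pos)) SIp => Y pY.
  rewrite ws_zl stw_idx ?inH1w_zword // idx_zword // idx_zw //.
  by rewrite (@ws_Gam_L k _ F) //; apply: stI_pn.
have E2 : ws (mulnc (z l) (stp (S (mulnc (z k) (wd a))) (wd b))) F =
   ws (SI (idx a)) (gS k (fun y => ws (stI y (idx b)) (shift l Phi))).
  rewrite /z ws_mul ws_wd ws_stp; under ws_ext => u do rewrite ws_wd.
  rewrite SK //; apply: (ws_in (P := pos)) SIp => Y pY; apply: gS_in' => // s ps.
  by rewrite stw_idx ?inH1w_zword // idx_zword.
have E3 : ws (mulnc (circz k l) (stp (S (wd a)) (wd b))) F =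
   ws (SI (idx a)) (fun Y => ws (stI Y (idx b)) (cS k l Phi)).
  rewrite ws_mul ws_circz !ws_stp !S0 // -ws_mulc -ws_add.
  apply: (ws_in (P := pos)) SIp => Y pY.
  by rewrite !ws_wd !stw_idx ?inH1w_zword // idx_zword // P2.
rewrite (ws_addnc (mulnc (gamma (z k)) _)) (ws_addnc (mulnc (z l) _)) ws_scalenc E0 E1 E2 E3.
rewrite -ws_mulc -!ws_add; apply: ws_ext => Y.
rewrite GenI //; ring.
Qed.

Lemma LH' l d c F : (0 < l)%N -> inH1w d -> inHyw c ->
  ws (mulnc (gamma (z l)) (wd c)) (fun v => ws (stw d v) F) =
  gS l (fun y => ws (stI (idx d) y) (fun s => F (zword s))) (idx c).
Proof.
move=> pl Hd Hc; rewrite ws_mulwd.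
have Hc' : inH1w c by rewrite /inH1w; move: Hc; rewrite /inHyw => ->; rewrite orbT.
rewrite /idx; case E: (idx_aux 0 c) (idx_ne 0 Hc) (pos_idx 0 c) => [//|q r] _ pqr.
have Ec : c = zword (q :: r) by rewrite -E; symmetry; exact: (zword_idx Hc').
rewrite Ec (@ws_gamma_cat l q r (fun x => ws (stw d x) F)) //; last by case/andP: pqr.
apply: gS_in => // s ps; by rewrite stw_idx ?inH1w_zword // idx_zword.
Qed.

Lemma XK k p Vw H : (0 < p)%N ->
  ws (mulnc (wd (xpow k)) (mulnc (z p) (wd Vw))) H = H (zw (k + p) ++ Vw).
Proof.
case: p => // p _.
rewrite ws_mul ws_wd ws_mul ws_wd ws_wd /xpow !zw_cat /= addnS /= nseqD -catA //.
Qed.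

Lemma part3_word k l p Vw c F : (0 < l)%N -> (0 < p)%N -> inH1w Vw -> inHyw c ->
  ws (stp (mulnc (wd (xpow k)) (mulnc (z p) (wd Vw))) (mulnc (gamma (z l)) (wd c))) F =
  ws (addnc (mulnc (z (k + p)) (stp (wd Vw) (mulnc (gamma (z l)) (wd c))))
     (addnc (mulnc (gamma (z l)) (stp (mulnc (wd (xpow k)) (mulnc (z p) (wd Vw))) (wd c)))
            (scalenc (1 - tt) (mulnc (circz (k + p) l) (stp (wd Vw) (wd c)))))) F.
Proof.
move=> pl pp HV Hc.
have Hc' : inH1w c by rewrite /inH1w; move: Hc; rewrite /inHyw => ->; rewrite orbT.
have pa : (0 < k + p)%N by rewrite addn_gt0 pp orbT.
have HaV := inH1w_zwcat (k + p) HV.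
have pV := pos_idx 0 Vw; have pC := pos_idx 0 c.
have paV : pos ((k + p)%N :: idx Vw) by exact/andP.
set Phi := fun s => F (zword s).
have E0 : ws (stp (mulnc (wd (xpow k)) (mulnc (z p) (wd Vw))) (mulnc (gamma (z l)) (wd c))) F =
   gS l (fun y => ws (stI ((k + p)%N :: idx Vw) y) Phi) (idx c).
  by rewrite ws_stp XK // LH' // idx_zw.
have E1 : ws (mulnc (z (k + p)) (stp (wd Vw) (mulnc (gamma (z l)) (wd c)))) F =
   gS l (fun y => ws (stI (idx Vw) y) (shift (k + p) Phi)) (idx c).
  by rewrite /z ws_mul ws_wd ws_stp ws_wd LH'.
have E2 : ws (mulnc (gamma (z l)) (stp (mulnc (wd (xpow k)) (mulnc (z p) (wd Vw))) (wd c))) F =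
   ws (stI ((k + p)%N :: idx Vw) (idx c)) (gS l Phi).
  rewrite ws_mul ws_exch ws_stp XK // ws_wd stw_idx // idx_zw //.
  rewrite (@ws_Gam_L l _ F) //; apply: stI_pn => //; exact: idx_ne.
have E3 : ws (mulnc (circz (k + p) l) (stp (wd Vw) (wd c))) F =
   ws (stI (idx Vw) (idx c)) (cS (k + p) l Phi).
  by rewrite ws_mul ws_circz !ws_stp !ws_wd !stw_idx // P2.
rewrite (ws_addnc (mulnc (z (k + p)) _)) (ws_addnc (mulnc (gamma (z l)) _)) ws_scalenc E0 E1 E2 E3.
move: (idx_ne 0 Hc) (pos_idx 0 c); rewrite /idx.
case: (idx_aux 0 c) => [|q W] // _ /andP [pq _].
rewrite Gen3 //; ring.
Qed.

Theorem lemma2p2 :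
  (* (i) *)
  (forall (k l : nat) (v w : NC), (1 <= k)%N -> (1 <= l)%N -> inHy v -> inH1 w ->
     eqnc (stp (mulnc (gamma (z k)) v) (mulnc (z l) w))
       (addnc (mulnc (gamma (z k)) (stp v (mulnc (z l) w)))
       (addnc (mulnc (z l) (stp (mulnc (gamma (z k)) v) w))
              (scalenc (1 - tt) (mulnc (circz k l) (stp v w)))))) /\
  (* (ii) *)
  (forall (k l : nat) (v w : NC), (1 <= k)%N -> (1 <= l)%N -> inH1 v -> inH1 w ->
     eqnc (stp (S (mulnc (z k) v)) (mulnc (z l) w))
       (addnc (mulnc (gamma (z k)) (stp (S v) (mulnc (z l) w)))
       (addnc (mulnc (z l) (stp (S (mulnc (z k) v)) w))
              (scalenc (1 - tt) (mulnc (circz k l) (stp (S v) w)))))) /\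
  (* (iii) *)
  (forall (k l p : nat) (V w : NC), (1 <= l)%N -> (1 <= p)%N -> inH1 V -> inHy w ->
     let v := mulnc (z p) V in
     eqnc (stp (mulnc (wd (xpow k)) v) (mulnc (gamma (z l)) w))
       (addnc (mulnc (z (k + p)) (stp V (mulnc (gamma (z l)) w)))
       (addnc (mulnc (gamma (z l)) (stp (mulnc (wd (xpow k)) v) w))
              (scalenc (1 - tt) (mulnc (circz (k + p) l) (stp V w)))))).
Proof.
split; [|split].
- move=> k l v w pk pl Hv Hw.
  apply: (bilin_red
    (E := fun v w => stp (mulnc (gamma (z k)) v) (mulnc (z l) w))
    (E' := fun v w => addnc (mulnc (gamma (z k)) (stp v (mulnc (z l) w)))
       (addnc (mulnc (z l) (stp (mulnc (gamma (z k)) v) w))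
              (scalenc (1 - tt) (mulnc (circz k l) (stp v w)))))
    (P := inHyw) (Q := inH1w)) Hv Hw.
  + move=> w'; exact: (lin_comp (lin_stl _) (lin_mull _)).
  + move=> v'; exact: (lin_comp (lin_str _) (lin_mull _)).
  + move=> w'; exact: (lin_add (lin_comp (lin_mull _) (lin_stl _))
       (lin_add (lin_comp (lin_mull _) (lin_comp (lin_stl _) (lin_mull _)))
                (lin_scale _ (lin_comp (lin_mull _) (lin_stl _))))).
  + move=> v'; exact: (lin_add (lin_comp (lin_mull _) (lin_comp (lin_str _) (lin_mull _)))
       (lin_add (lin_comp (lin_mull _) (lin_str _))
                (lin_scale _ (lin_comp (lin_mull _) (lin_str _))))).
  + by move=> a b Ha Hb F; apply: part1_word.
- move=> k l v w pk pl Hv Hw.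
  apply: (bilin_red
    (E := fun v w => stp (S (mulnc (z k) v)) (mulnc (z l) w))
    (E' := fun v w => addnc (mulnc (gamma (z k)) (stp (S v) (mulnc (z l) w)))
       (addnc (mulnc (z l) (stp (S (mulnc (z k) v)) w))
              (scalenc (1 - tt) (mulnc (circz k l) (stp (S v) w)))))
    (P := inH1w) (Q := inH1w)) Hv Hw.
  + move=> w'; exact: (lin_comp (lin_stl _) (lin_comp lin_S (lin_mull _))).
  + move=> v'; exact: (lin_comp (lin_str _) (lin_mull _)).
  + move=> w'; exact: (lin_add (lin_comp (lin_mull _) (lin_comp (lin_stl _) lin_S))
       (lin_add (lin_comp (lin_mull _) (lin_comp (lin_stl _) (lin_comp lin_S (lin_mull _))))
                (lin_scale _ (lin_comp (lin_mull _) (lin_comp (lin_stl _) lin_S))))).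
  + move=> v'; exact: (lin_add (lin_comp (lin_mull _) (lin_comp (lin_str _) (lin_mull _)))
       (lin_add (lin_comp (lin_mull _) (lin_str _))
                (lin_scale _ (lin_comp (lin_mull _) (lin_str _))))).
  + by move=> a b Ha Hb F; apply: part2_word.
- move=> k l p V w pl pp HV Hw v; rewrite /v.
  apply: (bilin_red
    (E := fun V w => stp (mulnc (wd (xpow k)) (mulnc (z p) V)) (mulnc (gamma (z l)) w))
    (E' := fun V w => addnc (mulnc (z (k + p)) (stp V (mulnc (gamma (z l)) w)))
       (addnc (mulnc (gamma (z l)) (stp (mulnc (wd (xpow k)) (mulnc (z p) V)) w))
              (scalenc (1 - tt) (mulnc (circz (k + p) l) (stp V w)))))
    (P := inH1w) (Q := inHyw)) HV Hw.
  + move=> w'; exact: (lin_comp (lin_stl _) (lin_comp (lin_mull _) (lin_mull _))).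
  + move=> v'; exact: (lin_comp (lin_str _) (lin_mull _)).
  + move=> w'; exact: (lin_add (lin_comp (lin_mull _) (lin_stl _))
       (lin_add (lin_comp (lin_mull _) (lin_comp (lin_stl _) (lin_comp (lin_mull _) (lin_mull _))))
                (lin_scale _ (lin_comp (lin_mull _) (lin_stl _))))).
  + move=> v'; exact: (lin_add (lin_comp (lin_mull _) (lin_comp (lin_str _) (lin_mull _)))
       (lin_add (lin_comp (lin_mull _) (lin_str _))
                (lin_scale _ (lin_comp (lin_mull _) (lin_str _))))).
  + by move=> a b Ha Hb F; apply: part3_word.
Qed.
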